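(* Let $n\ge2$, $1\le k\le n-1$, $N=\binom n2$, and let $(s_t)_{t\in\mathbb Z}$ be the periodic extension of a uniformly random sorting network in $\Omega_n$. Let $\mathrm{Sp}_{k,n}=Y-X$ with $X=\max\{t\le0:s_t=k\}$, $Y=\min\{t>0:s_t=k\}$; let $\widehat{\mathrm{Sp}}_{k,n}$ have the conditional law of $\min\{t>0:s_t=k\}$ given $\{s_0=k\}$; let $\mathbf T_{FS,n}(k)=\min\{t\ge1:s_t=k\}$. Put $f'_1(L)=\mathbb P(\mathrm{Sp}_{k,n}=L)$, $f'_2(L)=\mathbb P(\widehat{\mathrm{Sp}}_{k,n}=L)$, $g'(L)=\mathbb P(\mathbf T_{FS,n}(k)=L)$, $\Delta g'(L)=g'(L+1)-g'(L)$, and $M=\mathbb P(s_1=k)=|\{\omega\in\Omega_n:s_1=k\}|/|\Omega_n|$. Then for all $L\ge1$, $$-\Delta g'(L)\cdot L=f'_1(L),\qquad -\Delta g'(L)=M\cdot f'_2(L).$$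
   Context: $\tau_k=(k,k+1)\in\mathfrak S_n$. A sorting network of size $n$ is $(s_1,\dots,s_N)$, $s_i\in\{1,\dots,n-1\}$, with $\tau_{s_1}\cdots\tau_{s_N}=(n\ n-1\ \dots\ 2\ 1)$; $\Omega_n$ is the set of them, with the uniform measure. Its periodic extension is $(s_t)_{t\in\mathbb Z}$ with $s_{t+N}=n-s_t$ for all $t$ (a $2N$-periodic sequence). *)

(* Defs.v *)
From mathcomp Require Import all_boot all_order all_algebra.
Unset Printing Implicit Defensive.
Import Order.TTheory GRing.Theory Num.Theory.

Definition NN (n : nat) : nat := 'C(n, 2).

(* right multiplication of a word (one-line notation, 0-indexed positions)
   by the adjacent transposition tau_i = (i, i+1), i >= 1 (1-indexed values). *)
Definition tau_pos (i j : nat) : nat :=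
  if j == i.-1 then i else if j == i then i.-1 else j.
Definition swap_adj (l : seq nat) (i : nat) : seq nat :=
  [seq nth 0 l (tau_pos i j) | j <- iota 0 (size l)].

Definition word_of (n : nat) (s : seq nat) : seq nat :=
  foldl swap_adj (iota 1 n) s.

(* candidate words: N-tuples with entries in {0,..,n-1}; sorting networks
   additionally have entries >= 1 and product equal to the reversal n n-1 ... 1 *)
Definition is_sorting_network (n : nat) (w : (NN n).-tuple 'I_n) : bool :=
  all (fun i : 'I_n => 0 < i) w &&
  (word_of n [seq val i | i <- w] == rev (iota 1 n)).

Definition Omega (n : nat) : {set (NN n).-tuple 'I_n} :=
  [set w | is_sorting_network n w].

(* periodic extension: s_t for t = 1..N is the network, s_{t+N} = n - s_t *)
Definition ext (n : nat) (w : (NN n).-tuple 'I_n) (t : int) : nat :=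
  let m := (t - 1)%R in
  let q := (m %/ (NN n)%:Z)%Z in
  let r := `|(m %% (NN n)%:Z)%Z|%N in
  let b := nth 0 [seq val i | i <- w] r in
  if odd `|q|%N then n - b else b.

Definition Pr {n : nat} (E : pred ((NN n).-tuple 'I_n)) : rat :=
  (#|[set w in Omega n | E w]|%:R / #|Omega n|%:R)%R.

(* the event {Sp_{k,n} = L}: X = max{t<=0 : s_t = k} = -i, Y = min{t>0 : s_t=k} = L - i *)
Definition Sp_event (n k L : nat) (w : (NN n).-tuple 'I_n) : bool :=
  [exists i : 'I_L,
     let X := (- (i%:Z))%R in
     [&& ext n w X == k, ext n w (X + L%:Z)%R == k &
         [forall j : 'I_L, (0 < j)%N ==> (ext n w (X + j%:Z)%R != k)]]].

Definition Sphat_joint_event (n k L : nat) (w : (NN n).-tuple 'I_n) : bool :=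
  [&& ext n w 0 == k, ext n w L%:Z == k &
      [forall j : 'I_L, (0 < j)%N ==> (ext n w j%:Z != k)]].

Definition TFS_event (n k L : nat) (w : (NN n).-tuple 'I_n) : bool :=
  (0 < L)%N && (ext n w L%:Z == k) &&
  [forall j : 'I_L, (0 < j)%N ==> (ext n w j%:Z != k)].

Definition f1 (n k L : nat) : rat := Pr (n:=n) (Sp_event n k L).
Definition f2 (n k L : nat) : rat :=
  (Pr (n:=n) (Sphat_joint_event n k L) / Pr (n:=n) (fun w => ext n w 0 == k))%R.
Definition g (n k L : nat) : rat := Pr (n:=n) (TFS_event n k L).
Definition Mk (n k : nat) : rat := Pr (n:=n) (fun w => ext n w 1 == k).

(* Main.v *)
Require Import Defs.
From mathcomp Require Import all_boot all_order all_algebra.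
From mathcomp Require Import zify ring lra.
Import Order.TTheory GRing.Theory Num.Theory.

Lemma odd_abs_succ (a : int) : odd `|(a + 1)%R|%N = ~~ odd `|a|%N.
Proof. case: a => a /=. by rewrite addn1 /=. case: a => [|a] //=. 
by rewrite subn1 /= negbK. Qed.

Lemma tau_invol i j : tau_pos i (tau_pos i j) = j.
Proof. rewrite /tau_pos; repeat case: eqP => //=; lia. Qed.

Lemma tau_lt i j m : i < m -> j < m -> tau_pos i j < m.
Proof. rewrite /tau_pos; repeat case: eqP => //=; lia. Qed.

Lemma conj_tau n x j : 0 < x < n -> j < n ->
  (tau_pos x (n - (tau_pos (n - x) j).+1)).+1 = n - j.
Proof. rewrite /tau_pos; repeat case: eqP => //=; lia. Qed.

Lemma size_swap l i : size (swap_adj l i) = size l.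
Proof. by rewrite /swap_adj size_map size_iota. Qed.

Lemma nth_swap l i x : x < size l -> nth 0 (swap_adj l i) x = nth 0 l (tau_pos i x).
Proof. by move=> hx; rewrite /swap_adj (nth_map 0) ?size_iota // nth_iota. Qed.

Lemma foldr_tau_lt s j m : all (fun i => i < m) s -> j < m -> foldr tau_pos j s < m.
Proof. elim: s => //= i s IH /andP[hi hs] hj; exact: tau_lt (IH hs hj). Qed.

Lemma foldl_swap l s : all (fun i => i < size l) s ->
  size (foldl swap_adj l s) = size l /\
  forall j, j < size l -> nth 0 (foldl swap_adj l s) j = nth 0 l (foldr tau_pos j s).
Proof.
elim: s l => [|i s IH] l //= /andP[hi hs].
have hs' : all (fun x => x < size (swap_adj l i)) s by rewrite size_swap.
have [h1 h2] := IH _ hs'; rewrite size_swap in h1 h2; split => // j hj.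
by rewrite h2 // nth_swap // foldr_tau_lt.
Qed.

Lemma word_ofP n s : all (fun i => i < n) s ->
  (word_of n s == rev (iota 1 n)) = [forall j : 'I_n, (foldr tau_pos j s).+1 == n - j].
Proof.
move=> hs; rewrite /word_of.
have hs' : all (fun i => i < size (iota 1 n)) s by rewrite size_iota.
have [h1 h2] := foldl_swap _ _ hs'; rewrite size_iota in h1 h2.
apply/eqP/forallP => [H j | H].
  have hj := ltn_ord j.
  have := h2 j hj; rewrite H nth_rev ?size_iota // nth_iota; last lia.
  rewrite nth_iota; last by apply: foldr_tau_lt.
  move=> e; apply/eqP; move: e hj; set y := foldr _ _ _; set z := nat_of_ord j; clear; lia.
apply: (@eq_from_nth _ 0); first by rewrite h1 size_rev size_iota.
move=> j; rewrite h1 => hj; rewrite h2 // nth_rev ?size_iota // !nth_iota; first last.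
- exact: foldr_tau_lt.
- lia.
have := eqP (H (Ordinal hj)) => /= e; lia.
Qed.
Set Implicit Arguments. Unset Strict Implicit.

Lemma rotv_lt n (x : 'I_n) : (n - x) %% n < n.
Proof. by rewrite ltn_pmod // (leq_ltn_trans _ (ltn_ord x)). Qed.
Definition rotv n (x : 'I_n) : 'I_n := Ordinal (rotv_lt x).

Lemma rotv_inj n : injective (@rotv n).
Proof.
move=> x y /(congr1 val) /=; have hx := ltn_ord x; have hy := ltn_ord y.
move=> e; apply: val_inj => /=.
case: (posnP x) => [x0|xp]; case: (posnP y) => [y0|yp].
- by rewrite x0 y0.
- move: e; rewrite x0 subn0 modnn modn_small; lia.
- move: e; rewrite y0 subn0 modnn modn_small; lia.
- move: e; rewrite !modn_small; lia.
Qed.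

Lemma sub_lt a b : 0 < a -> a < b -> b - a < b.
Proof. lia. Qed.

Definition shift_seq n (s : seq 'I_n) : seq 'I_n :=
  if s is x :: s' then rcons s' (rotv x) else [::].

Lemma size_shift_seq n (s : seq 'I_n) : size (shift_seq s) = size s.
Proof. by case: s => //= x s; rewrite size_rcons. Qed.

Lemma shift_seqP n (w : (NN n).-tuple 'I_n) : size (shift_seq w) == NN n.
Proof. by rewrite size_shift_seq size_tuple. Qed.

Definition shift n (w : (NN n).-tuple 'I_n) : (NN n).-tuple 'I_n :=
  Tuple (shift_seqP w).

Lemma shift_inj n : injective (@shift n).
Proof.
move=> w1 w2 /(congr1 val) /= e; apply: val_inj => /=.
move: e; case: (val w1) => [|x1 s1]; case: (val w2) => [|x2 s2] //=.
- by move/(congr1 size); rewrite size_rcons.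
- by move/(congr1 size); rewrite size_rcons.
move/rcons_inj => [e1 e2]; rewrite e1; congr (_ :: _); apply: (@rotv_inj n); exact: val_inj.
Qed.

Lemma shift_Omega n w : w \in Omega n -> shift w \in Omega n.
Proof.
rewrite !inE /is_sorting_network /shift /=.
case: (val w) => [|x s] //= /andP[/andP[x0 hs] hw].
have hx := ltn_ord x.
have rv : nat_of_ord (rotv x) = n - x by rewrite /= modn_small //; lia.
have hall : forall t : seq 'I_n, all (fun i => i < n) [seq val i | i <- t].
  by move=> t; apply/allP => _ /mapP [i _ ->]; exact: ltn_ord.
move: hw; rewrite -/(map val (x :: s)) word_ofP // => /forallP H.
rewrite all_rcons rv hs andbT; apply/andP; split; first lia.
rewrite map_rcons word_ofP ?all_rcons ?hall ?andbT; last exact: ltn_ord.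
apply/forallP => j; rewrite foldr_rcons rv /=.
set y := tau_pos (n - x) j.
have hy : y < n by apply: tau_lt => //; apply: sub_lt.
have := eqP (H (Ordinal hy)) => /=.
move: (foldr tau_pos y _) => F e.
have e2 : tau_pos x F = n - y.+1 by move: e; clear; lia.
have -> : F = tau_pos x (n - y.+1) by rewrite -e2 tau_invol.
apply/eqP; rewrite /y conj_tau //; exact/andP.
Qed.

Lemma ext_char n (w : (NN n).-tuple 'I_n) (q : int) r : r < NN n ->
  ext n w (q * (NN n)%:Z + r%:Z + 1)%R =
  if odd `|q|%N then n - nth 0 (map val w) r else nth 0 (map val w) r.
Proof.
move=> hr; rewrite /ext addrK.
have hN : ((NN n)%:Z != 0)%R by rewrite eqz_nat; lia.
rewrite divzMDl // divz_small ?addr0; last by apply/andP; split; [|rewrite absz_nat]; lia.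
by rewrite modzMDl modz_small //; apply/andP; split; lia.
Qed.

Lemma NN_gt0 n : 2 <= n -> 0 < NN n.
Proof. by move=> h; rewrite /NN bin_gt0. Qed.

Lemma ext_shift n w t : 2 <= n -> w \in Omega n ->
  ext n (shift w) t = ext n w (t + 1)%R.
Proof.
move=> hn; rewrite inE /is_sorting_network => /andP[hpos _].
have hN := NN_gt0 hn.
have hNz : ((NN n)%:Z != 0)%R by rewrite eqz_nat; lia.
set q := ((t - 1) %/ (NN n)%:Z)%Z.
set r := `|((t - 1) %% (NN n)%:Z)%Z|%N.
have hrz : (r%:Z = (t - 1) %% (NN n)%:Z)%Z by rewrite /r gez0_abs // modz_ge0.
have hr : r < NN n.
  have := ltz_pmod (t - 1) (_ : (0 < (NN n)%:Z)%R); rewrite -hrz ltz_nat; apply.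
  by rewrite ltz_nat.
have ht : t = (q * (NN n)%:Z + r%:Z + 1)%R.
  by rewrite hrz /q -divz_eq subrK.
have [x [s ew]] : exists x s, val w = x :: s.
  have := size_tuple w; rewrite -[tval w]/(val w).
  case: (val w) => [|x s] /= e; last by exists x, s.
  lia.
have hsz : size s = (NN n).-1.
  have := size_tuple w; rewrite -[tval w]/(val w) ew /=; lia.
move: hpos; rewrite ew /= => /andP[hx _].
have hxn := ltn_ord x.
have eb : map val (shift w) = rcons (map val s) (n - x).
  by rewrite /= ew map_rcons /= modn_small //; apply: sub_lt.
rewrite ht ext_char // eb.
have mw : [seq val i | i <- tval w] = (x : nat) :: map val s by rewrite -[tval w]/(val w) ew.
case: (ltnP r.+1 (NN n)) => hr1.
  have e1 : (q * (NN n)%:Z + r%:Z + 1 + 1 = q * (NN n)%:Z + (r.+1)%:Z + 1)%R.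
    by rewrite intS; ring.
  rewrite e1 ext_char // mw /= nth_rcons size_map hsz.
  have -> : r < (NN n).-1 by lia.
  by [].
have er : r = (NN n).-1 by lia.
have e1 : (q * (NN n)%:Z + r%:Z + 1 + 1 = (q + 1) * (NN n)%:Z + 0%N%:Z + 1)%R.
  rewrite er; have -> : (NN n) = ((NN n).-1).+1 by lia.
  by rewrite intS; ring.
rewrite e1 ext_char // mw /= nth_rcons size_map hsz er ltnn eqxx odd_abs_succ.
case: (odd `|q|%N) => //=; lia.
Qed.

Lemma card_shift n (E : pred ((NN n).-tuple 'I_n)) :
  #|[set w in Omega n | E (shift w)]| = #|[set w in Omega n | E w]|.
Proof.
have im : (@shift n) @: Omega n = Omega n.
  apply/eqP; rewrite eqEcard card_imset; last exact: shift_inj.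
  rewrite leqnn andbT; apply/subsetP => _ /imsetP [w wO ->]; exact: shift_Omega.
rewrite -(card_imset _ (@shift_inj n)); congr (#|pred_of_set _|).
apply/setP => w'; rewrite inE; apply/imsetP/andP.
  case=> w; rewrite inE => /andP[wO hE] ->; split => //; exact: shift_Omega.
case=> w'O hE; move: w'O; rewrite -{1}im => /imsetP [w wO ew].
by exists w => //; rewrite inE wO -ew.
Qed.

Lemma iter_Omega n i w : w \in Omega n -> iter i (@shift n) w \in Omega n.
Proof. by elim: i => //= i IH /IH; apply: shift_Omega. Qed.

Lemma card_iter n i (E : pred ((NN n).-tuple 'I_n)) :
  #|[set w in Omega n | E (iter i (@shift n) w)]| = #|[set w in Omega n | E w]|.
Proof.
elim: i => [|i IH] //.
rewrite -IH -(card_shift (fun w => E (iter i (@shift n) w))).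
by congr (#|pred_of_set _|); apply/setP => w; rewrite !inE iterSr.
Qed.

Lemma ext_iter n i w t : 2 <= n -> w \in Omega n ->
  ext n (iter i (@shift n) w) t = ext n w (t + i%:Z)%R.
Proof.
move=> hn wO; elim: i t => [|i IH] t /=; first by rewrite addr0.
rewrite ext_shift //; last exact: iter_Omega.
by rewrite IH intS; congr (ext _ _ _); ring.
Qed.

Lemma card_eq_in n (P Q : pred ((NN n).-tuple 'I_n)) :
  (forall w, w \in Omega n -> P w = Q w) ->
  #|[set w in Omega n | P w]| = #|[set w in Omega n | Q w]|.
Proof.
move=> H; congr (#|pred_of_set _|); apply/setP => w; rewrite !inE.
by apply/idP/idP => /andP[h1 h2]; apply/andP; split => //; [by rewrite -H // inE | by rewrite H // inE].
Qed.

Lemma card_split (T : finType) (A : {set T}) (P Q : pred T) :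
  #|[set w in A | P w]| = #|[set w in A | P w && Q w]| + #|[set w in A | P w && ~~ Q w]|.
Proof.
rewrite -(cardsID [set w | Q w]); congr (_ + _); congr (#|pred_of_set _|);
  apply/setP => w; rewrite !inE; by case: (w \in A); case: (P w); case: (Q w).
Qed.

Lemma card_exists_disj (T : finType) (A : {set T}) L (E : 'I_L -> pred T) :
  (forall w i j, E i w -> E j w -> i = j) ->
  #|[set w in A | [exists i, E i w]]| = \sum_(i < L) #|[set w in A | E i w]|.
Proof.
move=> disj.
have -> : \sum_(i < L) #|[set w in A | E i w]| = \sum_(i < L) \sum_(w in A) (E i w : nat).
  apply: eq_bigr => i _; rewrite -sum1_card big_mkcond /= [RHS]big_mkcond /=.
  by apply: eq_bigr => w _; rewrite inE; case: (w \in A); case: (E i w).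
rewrite exchange_big /= -sum1_card big_mkcond /= [RHS]big_mkcond /=.
apply: eq_bigr => w _; rewrite inE; case: (w \in A) => //=.
case: existsP => [[i0 Hi0]|Hn].
  rewrite (bigD1 i0) //= Hi0 big1 // => j hj; case Ej: (E j w) => //.
  by move: hj; rewrite (disj _ _ _ Ej Hi0) eqxx.
by rewrite big1 // => i _; case Ei: (E i w) => //; case: Hn; exists i.
Qed.

Lemma forall_shift L (P : nat -> bool) : 0 < L ->
  [forall j : 'I_L.+1, (0 < j) ==> P j] = [forall j : 'I_L, (0 < j) ==> P j.+1] && P 1.
Proof.
move=> hL; apply/forallP/andP => [H | [/forallP H H1] j].
  have h1 : 1 < L.+1 by lia.
  split; last by have := H (Ordinal h1).
  apply/forallP => j; apply/implyP => _.
  have hj : j.+1 < L.+1 by rewrite ltnS ltn_ord.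
  by have := H (Ordinal hj).
apply/implyP => hj.
case ej: (nat_of_ord j) => [|j']; first by rewrite ej in hj.
case: j' ej => [|j'] ej; first by [].
have hj' : j'.+1 < L by have := ltn_ord j; rewrite ej; lia.
by have := H (Ordinal hj').
Qed.

Definition Ei n k L (i : 'I_L) (w : (NN n).-tuple 'I_n) : bool :=
  let X := (- (i%:Z))%R in
     [&& ext n w X == k, ext n w (X + L%:Z)%R == k &
         [forall j : 'I_L, (0 < j)%N ==> (ext n w (X + j%:Z)%R != k)]].
Arguments Ei : clear implicits.

Lemma Ei_disj n k L w (i j : 'I_L) : Ei n k L i w -> Ei n k L j w -> i = j.
Proof.
wlog: i j / i <= j.
  move=> H Hi Hj; case: (leqP i j) => h; first exact: H.
  by apply/esym/H => //; apply: ltnW.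
move=> hij /and3P[Hi _ _] /and3P[_ _ /forallP Hj].
apply: val_inj; apply/eqP; rewrite eqn_leq hij /= leqNgt; apply/negP => hlt.
have hjl : j - i < L by have := ltn_ord j; lia.
have := Hj (Ordinal hjl); rewrite /= subn_gt0 hlt /=.
have -> : (- (j%:Z) + (j - i)%N%:Z = - (i%:Z))%R by lia.
by rewrite Hi.
Qed.

Lemma card_Ei n k L (i : 'I_L) : 2 <= n ->
  #|[set w in Omega n | Ei n k L i w]| = #|[set w in Omega n | Sphat_joint_event n k L w]|.
Proof.
move=> hn; rewrite -(card_iter i); apply: card_eq_in => w wO.
rewrite /Ei /Sphat_joint_event /= !ext_iter // addNr.
rewrite (_ : (- i%:Z + L%:Z + i%:Z = L%:Z)%R); last by ring.
congr [&& _, _ & _]; apply: eq_forallb => j.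
by rewrite ext_iter // (_ : (- i%:Z + j%:Z + i%:Z = j%:Z)%R) //; ring.
Qed.

Unset Implicit Arguments.

Theorem proposition4p6 (n k L : nat) :
  (2 <= n)%N -> (1 <= k)%N -> (k <= n - 1)%N -> (1 <= L)%N ->
  (- (g n k L.+1 - g n k L) * L%:R = f1 n k L)%R /\
  (- (g n k L.+1 - g n k L) = Mk n k * f2 n k L)%R.
Proof.
move=> hn hk hkn hL.
set c1 := #|[set w in Omega n | Sphat_joint_event n k L w]|.
set c2 := #|[set w in Omega n | TFS_event n k L.+1 w]|.
have hT : #|[set w in Omega n | TFS_event n k L w]| = c1 + c2.
  rewrite (card_split _ _ (fun w => ext n w 0 == k)); congr (_ + _).
    apply: card_eq_in => w _; rewrite /TFS_event /Sphat_joint_event hL /=.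
    by rewrite andbC andbA.
  rewrite -card_shift /c2; apply: card_eq_in => w wO.
  rewrite /TFS_event !ext_shift // add0r /= (forall_shift (fun j => ext n w j%:Z != k)) //.
  rewrite (_ : (L%:Z + 1 = L.+1%:Z)%R); last by rewrite intS addrC.
  rewrite (eq_forallb (P2 := fun j : 'I_L => (0 < j) ==> (ext n w j.+1%:Z != k))); last first.
    by move=> j /=; rewrite ext_shift // intS addrC.
  rewrite hL /=.
  by case: (ext n w L.+1 == k); case: [forall j : 'I_L, _]; case: (ext n w 1 == k).
have hS : #|[set w in Omega n | Sp_event n k L w]| = L * c1.
  rewrite (_ : [set w in Omega n | Sp_event n k L w] = [set w in Omega n | [exists i, Ei n k L i w]]) //.
  rewrite card_exists_disj; last by move=> w i j; apply: Ei_disj.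
  rewrite (eq_bigr (fun _ => c1)); last by move=> i _; rewrite card_Ei.
  by rewrite sum_nat_const card_ord.
set p := #|[set w in Omega n | ext n w 0 == k]|.
have hM : #|[set w in Omega n | ext n w 1 == k]| = p.
  rewrite /p -(card_shift (fun w => ext n w 0 == k)); apply: card_eq_in => w wO; by rewrite ext_shift // add0r.
have hle : c1 <= p.
  apply: subset_leq_card; apply/subsetP => w; rewrite !inE => /andP[-> /and3P[-> _ _]].
  by [].
rewrite /f1 /f2 /g /Mk /Pr hT hS -/p hM -/c1 -/c2 !natrD !natrM.
set O := (#|Omega n|%:R : rat).
split; first by ring.
have e : (- (c2%:R / O - (c1%:R + c2%:R) / O) = c1%:R / O :> rat)%R by ring.
rewrite e; case: (posnP p) => [p0 | pp].
  have c10 : c1 = 0 by lia.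
  by rewrite p0 c10 !mul0r.
case: (eqVneq O 0%R) => [O0 | On0]; first by rewrite O0 !invr0 !mulr0.
have pn0 : (p%:R != 0 :> rat)%R by rewrite pnatr_eq0 -lt0n.
by field; apply/andP.
Qed.
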